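(* Let $I=(N,O,\succsim)$ be a general instance, $p$ a generalized random matching and $p'$ its associated random matching for the associated instance $I'$. Then $p$ is robust ex-post weakly stable if and only if $p'$ is robust ex-post weakly stable and $p$ is non-wasteful (i.e., $p'$ respects non-wastefulness).
   Context: General instance: $N=\{1,\dots,n\}$ agents, $O=\{o_1,\dots,o_m\}$ objects ($m,n\ge1$ arbitrary), $\emptyset$ the null object; each agent $i$ has a weak order $\succsim_i$ over $O\cup\{\emptyset\}$, each object $o$ a weak order $\succsim_o$ over $N\cup\{\emptyset\}$, with either $o\succ_i\emptyset$ or $\emptyset\succ_i o$, and either $i\succ_o\emptyset$ or $\emptyset\succ_o i$. $(i,o)$ is acceptable if $o\succ_i\emptyset$ and $i\succ_o\emptyset$. A generalized random matching is an $n\times m$ nonnegative matrix with row and column sums $\le1$; deterministic if entries are in $\{0,1\}$. $p$ is individually rational if $p(i,o)=0$ whenever $\emptyset\succ_i o$ or $\emptyset\succ_o i$; non-wasteful if there is no acceptable $(i,o)$ with $\sum_{o':o'\succsim_i o}p(i,o')<1$ and $\sum_j p(j,o)<1$. A generalized deterministic matching is weakly stable if it is individually rational and there is no acceptable $(i,o)$ with $\sum_{o':o'\succsim_i o}p(i,o')=0$ and $\sum_{j:j\succsim_o i}p(j,o)=0$. A decomposition of $p$ is $p=\sum_j\lambda_jP_j$ with $P_j$ generalized deterministic matchings, $\lambda_j\in(0,1]$, $\sum\lambda_j=1$. $p$ is robust ex-post weakly stable if it is non-wasteful and every decomposition of $p$ consists only of weakly stable generalized deterministic matchings. Associated instance: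 $D=\{d_1,\dots,d_m\}$, $\Phi=\{\phi_1,\dots,\phi_n\}$, $N'=N\cup D$, $O'=O\cup\Phi$, with weak orders (blocks best to worst, consecutive blocks strict): $i\in N$: objects acceptable to $i$ by $\succsim_i$, $\phi_i$, $\phi_k$ ($k\ne i$) in increasing index, objects unacceptable to $i$ by $\succsim_i$; $o_j$: agents acceptable to $o_j$ by $\succsim_{o_j}$, $d_j$, $d_k$ ($k\ne j$) in increasing index, agents unacceptable to $o_j$ by $\succsim_{o_j}$; $d_j$: $o_j$, other objects of $O$ in increasing index, then null objects with $\phi_k\succsim'_{d_j}\phi_l$ iff $k\succsim_{o_j}l$; $\phi_i$: $i$, other agents of $N$ in increasing index, then dummies with $d_k\succsim'_{\phi_i}d_l$ iff $o_k\succsim_i o_l$. Associated random matching: $p'(i,o_j)=p(i,o_j)$, $p'(d_j,\phi_i)=p(i,o_j)$, $p'(i,\phi_i)=1-\sum_o p(i,o)$, $p'(d_j,o_j)=1-\sum_i p(i,o_j)$, other entries $0$. For $I'$: a deterministic matching $q$ (bistochastic $\{0,1\}$-matrix) is weakly stable if there are no $a,b\in N'$, $c,c'\in O'$ with $q(a,c')=1$, $q(b,c)=1$, $c\succ'_a c'$, $a\succ'_c b$; a random matching (bistochastic matrix) is robust ex-post weakly stable if every representation of it as a convex combination with positive weights of deterministic matchings uses only weakly stable ones. *)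

(* Defs.v *)
From HB Require Import structures.
From mathcomp Require Import all_boot all_order all_algebra.
From mathcomp Require Import reals.
Set Implicit Arguments. Unset Strict Implicit. Unset Printing Implicit Defensive.
Import Order.TTheory GRing.Theory Num.Theory.
Local Open Scope ring_scope.

(* A weak preference relation  r x y  reads  "x is weakly preferred to y". *)
Definition weak_order (T : Type) (r : rel T) : Prop := total r /\ transitive r.
Definition sprefer (T : Type) (r : rel T) (x y : T) : bool := r x y && ~~ r y x.

(* General instance: agents N = 'I_n, objects O = 'I_m, the null object is None. *)
Section General.
Variables (n m : nat).
Variable prefA : 'I_n -> rel (option 'I_m).
Variable prefO : 'I_m -> rel (option 'I_n).

Definition general_instance : Prop :=
  [/\ (forall i, weak_order (prefA i)),
      (forall o, weak_order (prefO o)),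
      (forall i o, sprefer (prefA i) (Some o) None || sprefer (prefA i) None (Some o))
    & (forall o i, sprefer (prefO o) (Some i) None || sprefer (prefO o) None (Some i))].

Definition accA (i : 'I_n) (o : 'I_m) : bool := sprefer (prefA i) (Some o) None.
Definition accO (o : 'I_m) (i : 'I_n) : bool := sprefer (prefO o) (Some i) None.
Definition acceptable (i : 'I_n) (o : 'I_m) : bool := accA i o && accO o i.

Variable R : realType.

Definition gen_random_matching (p : 'I_n -> 'I_m -> R) : Prop :=
  [/\ (forall i o, 0 <= p i o),
      (forall i, \sum_o p i o <= 1)
    & (forall o, \sum_i p i o <= 1)].

Definition gen_deterministic (p : 'I_n -> 'I_m -> R) : Prop :=
  gen_random_matching p /\ (forall i o, p i o = 0 \/ p i o = 1).

Definition indiv_rational (p : 'I_n -> 'I_m -> R) : Prop :=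
  forall i o, sprefer (prefA i) None (Some o) || sprefer (prefO o) None (Some i) ->
    p i o = 0.

Definition non_wasteful (p : 'I_n -> 'I_m -> R) : Prop :=
  ~ exists i o, [/\ acceptable i o,
                    \sum_(o' | prefA i (Some o') (Some o)) p i o' < 1
                  & \sum_j p j o < 1].

Definition weakly_stable_gen (p : 'I_n -> 'I_m -> R) : Prop :=
  indiv_rational p /\
  ~ exists i o, [/\ acceptable i o,
                    \sum_(o' | prefA i (Some o') (Some o)) p i o' = 0
                  & \sum_(j | prefO o (Some j) (Some i)) p j o = 0].

Definition gen_decomposition (p : 'I_n -> 'I_m -> R) (k : nat)
    (lam : 'I_k -> R) (P : 'I_k -> 'I_n -> 'I_m -> R) : Prop :=
  [/\ (forall j, gen_deterministic (P j)),
      (forall j, 0 < lam j <= 1),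
      \sum_j lam j = 1
    & (forall i o, p i o = \sum_j lam j * P j i o)].

Definition robust_gen (p : 'I_n -> 'I_m -> R) : Prop :=
  non_wasteful p /\
  forall (k : nat) (lam : 'I_k -> R) (P : 'I_k -> 'I_n -> 'I_m -> R),
    gen_decomposition p lam P -> forall j, weakly_stable_gen (P j).

(* Associated instance: N' = N ∪ D  as  'I_n + 'I_m  (inl i = i, inr j = d_j),
   O' = O ∪ Φ  as  'I_m + 'I_n  (inl j = o_j, inr i = φ_i). *)

(* position of x in the order "a first, then the others by increasing index" *)
Definition keyI (N : nat) (a x : 'I_N) : nat := if x == a then 0%N else (x : nat).+1.

Definition prefA' (a : 'I_n + 'I_m) (x y : 'I_m + 'I_n) : bool :=
  match a, x, y with
  | inl i, inl o, inl o' =>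
      if accA i o == accA i o' then prefA i (Some o) (Some o') else accA i o
  | inl i, inl o, inr _ => accA i o
  | inl i, inr _, inl o => ~~ accA i o
  | inl i, inr k, inr l => (keyI i k <= keyI i l)%N
  | inr j, inl o, inl o' => (keyI j o <= keyI j o')%N
  | inr _, inl _, inr _ => true
  | inr _, inr _, inl _ => false
  | inr j, inr k, inr l => prefO j (Some k) (Some l)
  end.

Definition prefO' (c : 'I_m + 'I_n) (x y : 'I_n + 'I_m) : bool :=
  match c, x, y with
  | inl j, inl i, inl i' =>
      if accO j i == accO j i' then prefO j (Some i) (Some i') else accO j i
  | inl j, inl i, inr _ => accO j i
  | inl j, inr _, inl i => ~~ accO j i
  | inl j, inr k, inr l => (keyI j k <= keyI j l)%N
  | inr i, inl a, inl a' => (keyI i a <= keyI i a')%N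
  | inr _, inl _, inr _ => true
  | inr _, inr _, inl _ => false
  | inr i, inr k, inr l => prefA i (Some k) (Some l)
  end.

Definition assoc_matching (p : 'I_n -> 'I_m -> R)
    (a : 'I_n + 'I_m) (c : 'I_m + 'I_n) : R :=
  match a, c with
  | inl i, inl o => p i o
  | inr j, inr i => p i j
  | inl i, inr i' => if i' == i then 1 - \sum_o p i o else 0
  | inr j, inl j' => if j' == j then 1 - \sum_i p i j else 0
  end.

End General.

Section Standard.
Variables (A B : finType) (R : realType).
Variables (pA : A -> rel B) (pB : B -> rel A).

Definition bistochastic (q : A -> B -> R) : Prop :=
  [/\ (forall a b, 0 <= q a b),
      (forall a, \sum_b q a b = 1)
    & (forall b, \sum_a q a b = 1)].

Definition deterministic (q : A -> B -> R) : Prop :=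
  bistochastic q /\ (forall a b, q a b = 0 \/ q a b = 1).

Definition weakly_stable (q : A -> B -> R) : Prop :=
  ~ exists (a b : A) (c c' : B),
      [/\ q a c' = 1, q b c = 1, sprefer (pA a) c c' & sprefer (pB c) a b].

Definition robust_ws (q : A -> B -> R) : Prop :=
  bistochastic q /\
  forall (k : nat) (lam : 'I_k -> R) (Q : 'I_k -> A -> B -> R),
    (forall j, 0 < lam j) -> \sum_j lam j = 1 ->
    (forall j, deterministic (Q j)) ->
    (forall a b, q a b = \sum_j lam j * Q j a b) ->
    forall j, weakly_stable (Q j).

End Standard.

(* Main.v *)
Require Import Defs.
From HB Require Import structures.
From mathcomp Require Import all_boot all_order all_algebra.
From mathcomp Require Import reals.
From mathcomp Require Import lra.
Import Order.TTheory GRing.Theory Num.Theory.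
Local Open Scope ring_scope.

Section Gen.
Variable R : realType.

Lemma sum2_le {I : finType} {f : I -> R} {x y} :
  (forall i, 0 <= f i) -> x != y -> f x + f y <= \sum_i f i.
Proof.
move=> f0 xy; rewrite (bigD1 x) //= (@bigD1 _ _ _ _ y) /=; last by rewrite eq_sym.
by rewrite addrA lerDl sumr_ge0.
Qed.

Lemma sum1_le {I : finType} {f : I -> R} x :
  (forall i, 0 <= f i) -> f x <= \sum_i f i.
Proof. by move=> f0; rewrite (bigD1 x) //= lerDl sumr_ge0. Qed.

Lemma det_row (A B : finType) (q : A -> B -> R) a x y :
  deterministic q -> q a x = 1 -> q a y = 1 -> x = y.
Proof.
case=> [[q0 r c] _] hx hy; apply/eqP/negPn/negP => nxy.
have := sum2_le (q0 a) nxy; rewrite hx hy r; lra.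
Qed.

Lemma det_col (A B : finType) (q : A -> B -> R) b x y :
  deterministic q -> q x b = 1 -> q y b = 1 -> x = y.
Proof.
case=> [[q0 r c] _] hx hy; apply/eqP/negPn/negP => nxy.
have := sum2_le (fun a => q0 a b) nxy; rewrite hx hy c; lra.
Qed.

Lemma det_one_row (A B : finType) (q : A -> B -> R) a :
  deterministic q -> exists b, q a b = 1.
Proof.
case=> [[q0 r c] h01]; case: (pickP (fun b => q a b == 1)) => [b /eqP hb|h]; first by exists b.
have : \sum_b q a b = 0 by apply: big1 => b _; case: (h01 a b) => // e; move: (h b); rewrite e eqxx.
rewrite r => e; exfalso; move: e; lra.
Qed.

Lemma det_one_col (A B : finType) (q : A -> B -> R) b :
  deterministic q -> exists a, q a b = 1.
Proof.
case=> [[q0 r c] h01]; case: (pickP (fun a => q a b == 1)) => [a /eqP hb|h]; first by exists a.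
have : \sum_a q a b = 0 by apply: big1 => a _; case: (h01 a b) => // e; move: (h a); rewrite e eqxx.
rewrite c => e; exfalso; move: e; lra.
Qed.

Lemma sum01 (I : finType) (f : I -> R) :
  (forall i, f i = 0 \/ f i = 1) -> \sum_i f i <= 1 -> \sum_i f i = 0 \/ \sum_i f i = 1.
Proof.
move=> h01 hle; have f0 : forall i, 0 <= f i by move=> i; case: (h01 i) => ->.
case: (pickP (fun i => f i == 1)) => [x /eqP hx|h].
  right; apply/le_anti; rewrite hle /= -{1}hx; exact: (sum1_le x f0).
left; apply: big1 => i _; case: (h01 i) => // e; by move: (h i); rewrite e eqxx.
Qed.

Lemma sprefer_trans (T : Type) (r : rel T) x y z : transitive r ->
  sprefer r x y -> sprefer r y z -> sprefer r x z.
Proof.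
move=> tr /andP[xy nyx] /andP[yz nzy]; apply/andP; split; first exact: (tr _ _ _ xy yz).
apply/negP => zx; move/negP: nyx; apply; exact: (tr _ _ _ yz zx).
Qed.

Lemma sprefer_asym (T : Type) (r : rel T) x y : sprefer r x y -> ~~ sprefer r y x.
Proof. by case/andP => xy nyx; apply/negP => /andP[]; rewrite xy. Qed.

Lemma not_pref (T : Type) (r : rel T) x y : total r -> ~~ r x y -> sprefer r y x.
Proof. by move=> tot nxy; rewrite /sprefer nxy andbT; case/orP: (tot x y) => //; rewrite (negbTE nxy). Qed.

End Gen.
Arguments det_row {R A B q a x y}.
Arguments det_col {R A B q b x y}.
Arguments det_one_row {R A B q} a.
Arguments det_one_col {R A B q} b.
Arguments sum01 {R I f}.
Arguments sprefer_trans {T r x y z}.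
Arguments sprefer_asym {T r x y}.
Arguments not_pref {T r x y}.

Section Main.
Variable R : realType.
Variables (n m : nat) (prefA : 'I_n -> rel (option 'I_m)) (prefO : 'I_m -> rel (option 'I_n)).
Hypothesis gi : general_instance prefA prefO.

Local Notation pA' := (prefA' prefA prefO).
Local Notation pO' := (prefO' prefA prefO).

Lemma keyI_self N (a : 'I_N) : keyI a a = 0%N.
Proof. by rewrite /keyI eqxx. Qed.

Lemma ir_acc (P : 'I_n -> 'I_m -> R) i o :
  indiv_rational prefA prefO P -> P i o <> 0 -> accA prefA i o /\ accO prefO o i.
Proof.
case: gi => _ _ dA dO ir hP; split.
  case/orP: (dA i o) => // h; by exfalso; apply: hP; apply: ir; rewrite h.
case/orP: (dO o i) => // h; by exfalso; apply: hP; apply: ir; rewrite h orbT.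
Qed.

Lemma sum_if_eq (I : finType) (i : I) (F : I -> R) : \sum_k (if k == i then F k else 0) = F i.
Proof. by rewrite (bigD1 i) //= eqxx big1 ?addr0 // => k /negbTE ->. Qed.

Lemma sum_if_eq' (I : finType) (i : I) (F : I -> R) : \sum_k (if i == k then F k else 0) = F i.
Proof. by rewrite (bigD1 i) //= eqxx big1 ?addr0 // => k; rewrite eq_sym => /negbTE ->. Qed.

Lemma bist_assoc (x : 'I_n -> 'I_m -> R) :
  gen_random_matching x -> bistochastic (assoc_matching x).
Proof.
case=> x0 xr xc; split.
- case=> [i|j] [o|i'] /=; [exact: x0 | | | exact: x0]; case: eqP => _ //; rewrite subr_ge0 //.
- case=> [i|j]; rewrite big_sumType /= ?sum_if_eq ?sum_if_eq'; [by rewrite addrC subrK|by rewrite subrK].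
- case=> [o|i]; rewrite big_sumType /= ?sum_if_eq ?sum_if_eq'; [by rewrite addrC subrK|by rewrite subrK].
Qed.

Lemma det_assoc (x : 'I_n -> 'I_m -> R) :
  gen_deterministic x -> deterministic (assoc_matching x).
Proof.
case=> hx h01; split; first exact: bist_assoc.
case: hx => x0 xr xc.
case=> [i|j] [o|i'] /=; [exact: h01 | | | exact: h01]; case: eqP => _; try by left.
  by case: (sum01 (h01 i) (xr i)) => ->; [right|left]; lra.
by case: (sum01 (fun i => h01 i j) (xc j)) => ->; [right|left]; lra.
Qed.

Lemma assoc_lin (x : 'I_n -> 'I_m -> R) k (lam : 'I_k -> R) (P : 'I_k -> 'I_n -> 'I_m -> R) :
  \sum_l lam l = 1 -> (forall i o, x i o = \sum_l lam l * P l i o) ->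
  forall a c, assoc_matching x a c = \sum_l lam l * assoc_matching (P l) a c.
Proof.
move=> hs hx [i|j] [o|i'] /=; rewrite ?hx //.
- case: eqP => _; last by rewrite big1 // => l _; rewrite mulr0.
  have -> : \sum_l lam l * (1 - \sum_o P l i o) = \sum_l (lam l - \sum_o lam l * P l i o).
    by apply: eq_bigr => l _; rewrite mulrBr mulr1 mulr_sumr.
  rewrite sumrB hs exchange_big; congr (1 - _); apply: eq_bigr => t _; by rewrite hx.
- case: eqP => _; last by rewrite big1 // => l _; rewrite mulr0.
  have -> : \sum_l lam l * (1 - \sum_i P l i j) = \sum_l (lam l - \sum_i lam l * P l i j).
    by apply: eq_bigr => l _; rewrite mulrBr mulr1 mulr_sumr.
  rewrite sumrB hs exchange_big; congr (1 - _); apply: eq_bigr => t _; by rewrite hx.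
Qed.



Lemma ne0_of1 {x : R} : x = 1 -> x <> 0.
Proof. by move=> ->; apply/eqP; exact: oner_neq0. Qed.

Lemma ws_of_assoc (P : 'I_n -> 'I_m -> R) :
  gen_deterministic P -> weakly_stable pA' pO' (assoc_matching P) ->
  weakly_stable_gen prefA prefO P.
Proof.
move=> hP hws; have hQ := det_assoc P hP.
case: hP => [[P0 Pr Pc] P01].
case: (gi) => [wA wO dA dO].
have ir : indiv_rational prefA prefO P.
  move=> i o h; case: (P01 i o) => // h1; exfalso; apply: hws.
  case/orP: h => h.
  - have hA : accA prefA i o = false := negbTE (sprefer_asym h).
    exists (inl i), (inr o), (inr i), (inl o).
    by split; rewrite /sprefer /= ?h1 ?hA ?eqxx.
  - have hO : accO prefO o i = false := negbTE (sprefer_asym h).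
    exists (inr o), (inl i), (inl o), (inr i).
    by split; rewrite /sprefer /= ?h1 ?hO ?eqxx.
split => //; case=> i [o [/andP[aA aO] sA sO]].
have zA : forall o', prefA i (Some o') (Some o) -> P i o' = 0.
  by apply: (psumr_eq0P _ sA) => o' _; exact: P0.
have zO : forall j, prefO o (Some j) (Some i) -> P j o = 0.
  by apply: (psumr_eq0P _ sO) => j _; exact: P0.
apply: hws.
case: (det_one_row (inl i) hQ) => c' hc'.
case: (det_one_col (inl o) hQ) => b hb.
exists (inl i), b, (inl o), c'; split => //.
- case: c' hc' => [o'' /= h|i' _]; last by rewrite /sprefer /= aA.
  have [a1 _] := @ir_acc P i o'' ir (ne0_of1 h) .
  have npo : ~~ prefA i (Some o'') (Some o).
    by apply/negP => /zA; rewrite h => e; move: e; lra.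
  rewrite /sprefer /= aA a1 /=.
  exact: not_pref (proj1 (wA i)) npo.
- case: b hb => [j /= h|j' _]; last by rewrite /sprefer /= aO.
  have [_ a1] := @ir_acc P j o ir (ne0_of1 h).
  have npo : ~~ prefO o (Some j) (Some i).
    by apply/negP => /zO; rewrite h => e; move: e; lra.
  rewrite /sprefer /= aO a1 /=.
  exact: not_pref (proj1 (wO o)) npo.
Qed.



Section Forward.
Variable Q : 'I_n + 'I_m -> 'I_m + 'I_n -> R.
Hypothesis hQ : deterministic Q.
Hypothesis sAg : forall i i', i' != i -> Q (inl i) (inr i') = 0.
Hypothesis sDg : forall j j', j' != j -> Q (inr j) (inl j') = 0.

Lemma Q01 a c : Q a c <> 1 -> Q a c = 0.
Proof. by case: (hQ.2 a c). Qed.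

Lemma supA i i' : Q (inl i) (inr i') = 1 -> i' = i.
Proof.
move=> h; apply/eqP; apply/negPn/negP => ne; have := sAg _ _ ne; rewrite h; exact: (ne0_of1 erefl).
Qed.

Lemma supD j j' : Q (inr j) (inl j') = 1 -> j' = j.
Proof.
move=> h; apply/eqP; apply/negPn/negP => ne; have := sDg _ _ ne; rewrite h; exact: (ne0_of1 erefl).
Qed.

Lemma agent_side i o c' :
  indiv_rational prefA prefO (fun i o => Q (inl i) (inl o)) ->
  Q (inl i) c' = 1 -> sprefer (pA' (inl i)) (inl o) c' ->
  accA prefA i o /\ \sum_(o' | prefA i (Some o') (Some o)) Q (inl i) (inl o') = 0.
Proof.
move=> irP hc' sa; case: c' hc' sa => [o''|i''] hc' sa.
- have [a1 _] := @ir_acc (fun i o => Q (inl i) (inl o)) i o'' irP (ne0_of1 hc').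
  move: sa; rewrite /sprefer /= a1; case aA: (accA prefA i o) => //=.
  move=> /andP[h1 h2]; split => //; apply: big1 => o' ho'; apply: Q01 => e.
  have := det_row hQ e hc'; case=> eo; move: h2; by rewrite -eo ho'.
- move: sa; rewrite /sprefer /=; case aA: (accA prefA i o) => //= _; split => //.
  apply: big1 => o' ho'; apply: Q01 => e; by have := det_row hQ e hc'.
Qed.

Lemma object_side i o b :
  indiv_rational prefA prefO (fun i o => Q (inl i) (inl o)) ->
  Q b (inl o) = 1 -> sprefer (pO' (inl o)) (inl i) b ->
  accO prefO o i /\ \sum_(j | prefO o (Some j) (Some i)) Q (inl j) (inl o) = 0.
Proof.
move=> irP hb sc; case: b hb sc => [j''|j''] hb sc.
- have [_ a1] := @ir_acc (fun i o => Q (inl i) (inl o)) j'' o irP (ne0_of1 hb).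
  move: sc; rewrite /sprefer /= a1; case aO: (accO prefO o i) => //=.
  move=> /andP[h1 h2]; split => //; apply: big1 => j hj; apply: Q01 => e.
  have := det_col hQ e hb; case=> ej; move: h2; by rewrite -ej hj.
- move: sc; rewrite /sprefer /=; case aO: (accO prefO o i) => //= _; split => //.
  apply: big1 => j hj; apply: Q01 => e; by have := det_col hQ e hb.
Qed.

Lemma ws_of_parts :
  weakly_stable_gen prefA prefO (fun i o => Q (inl i) (inl o)) ->
  weakly_stable_gen prefA prefO (fun i o => Q (inr o) (inr i)) ->
  weakly_stable pA' pO' Q.
Proof.
case: (gi) => [wA wO dA dO].
move=> [irP bP] [irM bM] [a [b [c [c' [hac' hbc sa sc]]]]].
case: a hac' sa sc => [i|j] hac' sa sc; case: c hbc sa sc => [o|k] hbc sa sc.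
- apply: bP; exists i, o.
  have [x1 x2] := agent_side _ _ _ irP hac' sa.
  have [y1 y2] := object_side _ _ _ irP hbc sc.
  by split => //; rewrite /acceptable x1 y1.
- case: c' hac' sa => [o''|i''] hac' sa.
  + have [a1 _] := @ir_acc (fun i o => Q (inl i) (inl o)) i o'' irP (ne0_of1 hac').
    by move: sa; rewrite /sprefer /= a1.
  + move: sa; rewrite (supA _ _ hac') /sprefer /= keyI_self leq0n; by rewrite andbF.
- case: c' hac' sa => [j''|i] hac' sa.
  + move: sa; rewrite (supD _ _ hac') /sprefer /= keyI_self leq0n; by rewrite andbF.
  + case: b hbc sc => [j'|j''] hbc sc.
    * have [_ a1] := @ir_acc (fun i o => Q (inl i) (inl o)) j' o irP (ne0_of1 hbc).
      by move: sc; rewrite /sprefer /= a1.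
    * move: sc; rewrite -(supD _ _ hbc) /sprefer /= keyI_self leq0n; by rewrite andbF.
- case: c' hac' sa => [j''|i] hac' sa; first by move: sa; rewrite /sprefer.
  case: b hbc sc => [i''|j'] hbc sc.
    by move: sc; rewrite -(supA _ _ hbc) /sprefer /=.
  move: sa sc; rewrite /sprefer /= => sa sc.
  have [aij oji] := @ir_acc (fun i o => Q (inr o) (inr i)) i j irM (ne0_of1 hac').
  have [akj' oj'k] := @ir_acc (fun i o => Q (inr o) (inr i)) k j' irM (ne0_of1 hbc).
  apply: bM; exists k, j; split.
  + rewrite /acceptable /accA /accO.
    rewrite (sprefer_trans (proj2 (wA k)) sc akj').
    by rewrite (sprefer_trans (proj2 (wO j)) sa oji).
  + apply: big1 => o' ho'; apply: Q01 => e.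
    have := det_col hQ e hbc; case=> eo; move/andP: sc => [_]; by rewrite -eo ho'.
  + apply: big1 => x hx; apply: Q01 => e.
    have := det_row hQ e hac'; case=> ex; move/andP: sa => [_]; by rewrite -ex hx.
Qed.

End Forward.

Lemma det_restr_l (Q : 'I_n + 'I_m -> 'I_m + 'I_n -> R) :
  deterministic Q -> gen_deterministic (fun i o => Q (inl i) (inl o)).
Proof.
case=> [[q0 qr qc] q01]; split => //; split => //.
- move=> i; have := qr (inl i); rewrite big_sumType /= => e.
  by rewrite -e lerDl sumr_ge0.
- move=> o; have := qc (inl o); rewrite big_sumType /= => e.
  by rewrite -e lerDl sumr_ge0.
Qed.

Lemma det_restr_r (Q : 'I_n + 'I_m -> 'I_m + 'I_n -> R) :
  deterministic Q -> gen_deterministic (fun i o => Q (inr o) (inr i)).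
Proof.
case=> [[q0 qr qc] q01]; split => //; split => //.
- move=> i; have := qc (inr i); rewrite big_sumType /= => e.
  by rewrite -e lerDr sumr_ge0.
- move=> o; have := qr (inr o); rewrite big_sumType /= => e.
  by rewrite -e lerDr sumr_ge0.
Qed.

End Main.

Theorem proposition27 (R : realType) (n m : nat)
    (prefA : 'I_n -> rel (option 'I_m)) (prefO : 'I_m -> rel (option 'I_n))
    (p : 'I_n -> 'I_m -> R) :
  (0 < n)%N -> (0 < m)%N ->
  general_instance prefA prefO ->
  gen_random_matching p ->
  robust_gen prefA prefO p <->
  robust_ws (prefA' prefA prefO) (prefO' prefA prefO) (assoc_matching p)
  /\ non_wasteful prefA prefO p.
Proof.
move=> _ _ gi hp; split.
- case=> nw hrob; split => //; split; first exact: bist_assoc.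
  move=> k lam Q lam0 hs hdet hdec j.
  have q0 : forall l a c, 0 <= Q l a c by move=> l a c; case: (hdet l) => [[]].
  have supp : forall a c, assoc_matching p a c = 0 -> forall l, Q l a c = 0.
    move=> a c h0 l; rewrite hdec in h0.
    have h : lam l * Q l a c = 0.
      by apply: (psumr_eq0P _ h0) => // l' _; exact: mulr_ge0 (ltW (lam0 l')) (q0 l' a c).
    by move/eqP: h; rewrite mulf_eq0 (gt_eqF (lam0 l)) /= => /eqP.
  have hlam : forall l, 0 < lam l <= 1.
    by move=> l; rewrite lam0 /= -hs; apply: (@sum1_le R _ _ l) => l'; apply: ltW.
  have dP : gen_decomposition p lam (fun l i o => Q l (inl i) (inl o)).
    split => //; [move=> l; exact: det_restr_l | move=> i o; exact: (hdec (inl i) (inl o))].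
  have dM : gen_decomposition p lam (fun l i o => Q l (inr o) (inr i)).
    split => //; [move=> l; exact: det_restr_r | move=> i o; exact: (hdec (inr o) (inr i))].
  apply: (@ws_of_parts R n m prefA prefO gi (Q j) (hdet j)).
  + by move=> i i' ne; apply: supp; rewrite /= (negbTE ne).
  + by move=> i i' ne; apply: supp; rewrite /= (negbTE ne).
  + exact: (hrob _ _ _ dP j).
  + exact: (hrob _ _ _ dM j).
- case=> [[hb hrob] nw]; split => // k lam P [hdet hlam hs hp'] j.
  apply: (@ws_of_assoc R n m prefA prefO gi (P j) (hdet j)).
  apply: (hrob k lam (fun l => assoc_matching (P l))) => //.
  + by move=> l; case/andP: (hlam l).
  + move=> l; exact: det_assoc.
  + exact: assoc_lin.
Qed.
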